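(* Let $n>1$, $a\in\mathcal{T}_n$, and consider the semigroup $(\mathcal{T}_n,*_a)$. Let $x\in\mathcal{T}_n$. If $\operatorname{rank}(a)>1$, $\operatorname{rank}(x)\le\operatorname{rank}(a)$, and every block $B$ of $\rho_x$ satisfies $B\cap\operatorname{ran}(a)\ne\varnothing$, then $$L_x=\{y\in\mathcal{T}_n : \operatorname{ran}(y)=\operatorname{ran}(x) \text{ and } B\cap\operatorname{ran}(a)\neq\varnothing \text{ for every block } B \text{ of } \rho_y\}.$$ Otherwise $L_x=\{x\}$. In particular, if $\operatorname{rank}(a)=1$ then all $\mathcal{L}$-classes of $(\mathcal{T}_n,*_a)$ consist of one element.
   Context: $\mathcal{T}_n$ is the set of all maps $N\to N$, $N=\{1,\dots,n\}$. Maps are composed from left to right: $(xy)(i)=y(x(i))$. For fixed $a\in\mathcal{T}_n$, $x*_a y:=xay$; $(\mathcal{T}_n,*_a)$ is a semigroup. $\operatorname{ran}(x)$ is the image of $x$, $\operatorname{rank}(x)=|\operatorname{ran}(x)|$, and $\rho_x$ is the partition of $N$ into the nonempty fibres of $x$ ($i,j$ in the same block iff $x(i)=x(j)$). Green's relations in a semigroup $S$: with $S^1$ the semigroup $S$ with an identity adjoined, $x\mathcal{L}y$ iff $S^1x=S^1y$, $x\mathcal{R}y$ iff $xS^1=yS^1$, $\mathcal{H}=\mathcal{L}\cap\mathcal{R}$, $\mathcal{D}=\mathcal{L}\circ\mathcal{R}$ (which equals $\mathcal{R}\circ\mathcal{L}$); $L_x,R_x,H_x,D_x$ denote the classes of $x$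 in $(\mathcal{T}_n,*_a)$. *)

(* Defs.v *)
From mathcomp Require Import all_boot.
Set Implicit Arguments. Unset Strict Implicit. Unset Printing Implicit Defensive.

(* T_n : all maps N -> N, N = {1..n} represented by 'I_n *)
Definition Tn (n : nat) := {ffun 'I_n -> 'I_n}.

(* composition left to right: (x y)(i) = y (x i) *)
Definition tcomp n (x y : Tn n) : Tn n := [ffun i => y (x i)].

Definition smul n (a x y : Tn n) : Tn n := tcomp (tcomp x a) y.

Definition ran n (x : Tn n) : {set 'I_n} := [set x i | i in 'I_n].
Definition rank n (x : Tn n) : nat := #|ran x|.

Definition rho n (x : Tn n) : {set {set 'I_n}} :=
  [set [set j | x j == x i] | i in 'I_n].

Definition S1left n (a x : Tn n) (z : Tn n) : Prop :=
  z = x \/ exists s : Tn n, z = smul a s x.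

Definition Lrel n (a x y : Tn n) : Prop :=
  forall z, S1left a x z <-> S1left a y z.

(* Main.v *)
Require Import Defs.
From mathcomp Require Import all_boot.

Section H.
Variables (n : nat) (a : Tn n).

Definition good (x : Tn n) := ran x \subset x @: ran a.

Lemma img_sub (x : Tn n) : x @: ran a \subset ran x.
Proof. apply/subsetP=> v /imsetP[j _ ->]; exact: imset_f. Qed.

Lemma good_eq x : good x -> x @: ran a = ran x.
Proof. by move=> g; apply/eqP; rewrite eqEsubset img_sub; exact: g. Qed.

Lemma S1P x z : S1left a x z <-> (z = x \/ ran z \subset x @: ran a).
Proof.
split.
- case=> [->|[s ->]]; [by left|right].
  apply/subsetP=> v /imsetP[i _ ->]; rewrite /smul /tcomp !ffunE.
  apply: imset_f; exact: imset_f.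
- case=> [->|H]; [by left|right].
  have P i : exists k, x (a k) == z i.
    have : z i \in x @: ran a by apply: (subsetP H); exact: imset_f.
    by case/imsetP=> j /imsetP[k _ ->] ->; exists k.
  exists [ffun i => odflt i [pick k | x (a k) == z i]].
  apply/ffunP=> i; rewrite /smul /tcomp !ffunE.
  case: pickP=> [k /eqP //|N]; case: (P i)=> k Hk; by rewrite N in Hk.
Qed.

Lemma block_good x :
  (forall B, B \in rho x -> B :&: ran a != set0) <-> good x.
Proof.
split.
- move=> H; apply/subsetP=> v /imsetP[i _ ->].
  have : [set j | x j == x i] :&: ran a != set0 by apply: H; exact: imset_f.
  case/set0Pn=> j; rewrite !inE => /andP[/eqP <- Hj]; exact: imset_f.
- move=> g B /imsetP[i _ ->]; apply/set0Pn.
  have : x i \in x @: ran a by apply: (subsetP g); exact: imset_f.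
  case/imsetP=> j Hj E; exists j; by rewrite !inE -E eqxx.
Qed.

Lemma Lrel_dec x y : Lrel a y x ->
  y = x \/ (good y /\ good x /\ ran y = ran x).
Proof.
move=> L; case: (eqVneq y x)=> [->|ne]; [by left|right].
have /S1P[E|H1] : S1left a x y by apply/L; left.
  by rewrite E eqxx in ne.
have /S1P[E|H2] : S1left a y x by apply/L; left.
  by rewrite E eqxx in ne.
have s1 := subset_trans H1 (img_sub x).
have s2 := subset_trans H2 (img_sub y).
have E : ran y = ran x by apply/eqP; rewrite eqEsubset s1 s2.
split; last split; last by [].
- by apply: subset_trans H2; rewrite E.
- by apply: subset_trans H1; rewrite -E.
Qed.

Lemma Lrel_good x y : good x -> good y -> ran y = ran x -> Lrel a y x.
Proof.
move=> gx gy E z.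
have K w : good w -> S1left a w z <-> ran z \subset ran w.
  move=> gw; split.
    by case/S1P=> [->|]; [|rewrite (good_eq _ gw)].
  by move=> h; apply/S1P; right; rewrite (good_eq _ gw).
split=> h.
  by apply/(K _ gx); rewrite -E; apply/(K _ gy).
by apply/(K _ gy); rewrite E; apply/(K _ gx).
Qed.

Lemma rank_good x : good x -> rank x <= rank a.
Proof. move=> g; rewrite /rank -(good_eq _ g); exact: leq_imset_card. Qed.

Lemma small_eq (x y : Tn n) : ran y = ran x -> #|ran x| <= 1 -> y = x.
Proof.
move=> E /card_le1_eqP H; apply/ffunP=> i.
apply: H; [|rewrite -E]; exact: imset_f.
Qed.

End H.

Theorem theorem6 (n : nat) (hn : 1 < n) (a : Tn n) :
  (forall x : Tn n,
     (1 < rank a /\ rank x <= rank a /\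
        (forall B, B \in rho x -> B :&: ran a != set0)) ->
     forall y : Tn n, Lrel a y x <->
       (ran y = ran x /\ forall B, B \in rho y -> B :&: ran a != set0)) /\
  (forall x : Tn n,
     ~ (1 < rank a /\ rank x <= rank a /\
        (forall B, B \in rho x -> B :&: ran a != set0)) ->
     forall y : Tn n, Lrel a y x <-> y = x) /\
  (rank a = 1 -> forall x y : Tn n, Lrel a y x -> y = x).
Proof.
split; [|split].
- move=> x [_ [_ /block_good gx]] y; split.
  + case/Lrel_dec=> [->|[gy [_ E]]]; first by split=> //; apply/block_good.
    by split=> //; apply/block_good.
  + case=> E /block_good gy; exact: Lrel_good.
- move=> x N y; split; last by move=> ->; split.
  case/Lrel_dec=> [//|[gy [gx E]]]; apply: small_eq => //.
  have hr := @rank_good _ _ _ gx.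
  have : ~~ (1 < rank a).
    apply/negP=> h; apply: N; split=> //; split=> //; exact/block_good.
  rewrite -leqNgt => h1; exact: leq_trans hr h1.
- move=> r1 x y /Lrel_dec [//|[gy [gx E]]]; apply: small_eq => //.
  by have := @rank_good _ _ _ gx; rewrite r1.
Qed.
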